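(* Let $(r_I)_I$ be a family of idempotent functions $r_I:[0,1]^I\times[0,1]\to[0,1]^I\times[0,1]$ satisfying (1) $r_I(u,z)=(u,z)$ iff $\partial_I u=1$ or $z=0$, and (2) $r_J(f\times\mathrm{id})r_I=r_J(f\times\mathrm{id})$ for every strict $f\in\mathrm{Hom}(I,J)$. Let $(r_\psi)$, for $I$ a finite set of names and $\psi\in\mathbb{F}(I)$, be functions $[0,1]^I\times[0,1]\to[0,1]^I\times[0,1]$ satisfying: (a) $r_\psi=\mathrm{id}$ if $\psi=1_\mathbb{F}$; (b) $r_\psi=r_\psi r_I$ if $\psi\neq1_\mathbb{F}$; (c) $r_\psi(u,z)=(u,z)$ if $z=0$; (d) $r_\psi((ib)\times\mathrm{id})=((ib)\times\mathrm{id})r_{\psi(ib)}$ for $i\in I$, $b\in\{0,1\}$. Then for every morphism $f\in\mathrm{Hom}(I,J)$ and every $\psi\in\mathbb{F}(J)$, $$r_\psi\circ(f\times\mathrm{id})=(f\times\mathrm{id})\circ r_{\psi f}.$$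
   Context: Fix a countably infinite set of names. $\mathsf{dM}(J)$ is the free de Morgan algebra on $J$. The cube category $\mathcal{C}$ has finite sets of names as objects; $f\in\mathrm{Hom}(I,J)$ is a map $J\to\mathsf{dM}(I)$, composed by substitution; $f$ is strict if it never takes value $0$ or $1$. Using the de Morgan algebra $([0,1],\min,\max,1-x)$, $f\in\mathrm{Hom}(I,J)$ induces $f:[0,1]^I\to[0,1]^J$, $(fu)_j=f(j)$ evaluated at $u$. The face map $(ib)\in\mathrm{Hom}(I-\{i\},I)$ sends $i\mapsto b$, $j\mapsto j$ otherwise. The face lattice $\mathbb{F}$ is the distributive lattice generated by $(i=0),(i=1)$ for names $i$ subject to $(i=0)\wedge(i=1)=0_\mathbb{F}$; $\mathbb{F}(I)$ is the sublattice generated by generators with $i\in I$. For $\psi\in\mathbb{F}(J)$ and $f\in\mathrm{Hom}(I,J)$, $\psi f\in\mathbb{F}(I)$ is the substitution sending $(j=1)$ to $(f(j)=1)$ and $(j=0)$ to $(1-f(j)=1)$, where $r\mapsto(r=1)$ is the lattice map $\mathsf{dM}(I)\to\mathbb{F}(I)$ with $i\mapsto(i=1)$, $1-i\mapsto(i=0)$, $0\mapsto 0_\mathbb{F}$, $1\mapsto1_\mathbb{F}$; in particular $\psi(ib)$ substitutes $(i=b)\mapsto 1_\mathbb{F}$, $(i=1-b)\mapsto 0_\mathbb{F}$. For $u\in[0,1]^I$, $\partial_I u=1$ means some $u_i\in\{0,1\}$. *)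

(* Defs.v *)
From mathcomp Require Import all_boot.
From Stdlib Require Import Reals Lra.

Set Implicit Arguments.
Unset Strict Implicit.
Unset Printing Implicit Defensive.

(* Names: the countably infinite set nat.  A finite set of names is
   represented canonically by its strictly increasing enumeration, so that
   equal sets are equal objects. *)
Definition fset := {s : seq nat | sorted ltn s}.
Definition fmem (I : fset) : pred nat := fun i => i \in sval I.

Lemma fremove_proof (I : fset) (i : nat) :
  sorted ltn (filter (predC1 i) (sval I)).
Proof. apply: sorted_filter; [exact: ltn_trans | exact: (svalP I)]. Qed.

Definition fremove (I : fset) (i : nat) : fset :=
  exist _ (filter (predC1 i) (sval I)) (fremove_proof I i).

Definition name_in (I : fset) := {i : nat | fmem I i}.

Definition unitI := {x : R | (0 <= x <= 1)%R}.

Lemma u0_proof : (0 <= 0 <= 1)%R. Proof. split; [apply Rle_refl | apply Rle_0_1]. Qed.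
Lemma u1_proof : (0 <= 1 <= 1)%R. Proof. split; [apply Rle_0_1 | apply Rle_refl]. Qed.
Definition u0 : unitI := exist _ 0%R u0_proof.
Definition u1 : unitI := exist _ 1%R u1_proof.

Lemma umin_proof (x y : unitI) : (0 <= Rmin (sval x) (sval y) <= 1)%R.
Proof.
case: x => x [hx0 hx1]; case: y => y [hy0 hy1] /=.
unfold Rmin; destruct (Rle_dec x y); split; assumption.
Qed.
Lemma umax_proof (x y : unitI) : (0 <= Rmax (sval x) (sval y) <= 1)%R.
Proof.
case: x => x [hx0 hx1]; case: y => y [hy0 hy1] /=.
unfold Rmax; destruct (Rle_dec x y); split; assumption.
Qed.
Lemma uneg_proof (x : unitI) : (0 <= 1 - sval x <= 1)%R.
Proof. case: x => x [hx0 hx1] /=; split; lra. Qed.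

Definition umin (x y : unitI) : unitI := exist _ _ (umin_proof x y).
Definition umax (x y : unitI) : unitI := exist _ _ (umax_proof x y).
Definition uneg (x : unitI) : unitI := exist _ _ (uneg_proof x).

(* Terms over the names; dM(I) = terms with variables in I, modulo dMeq,
   the congruence generated by the de Morgan algebra axioms
   (bounded distributive lattice + involutive negation + De Morgan law). *)
Inductive dMt : Type :=
| dVar  : nat -> dMt
| dZero : dMt
| dOne  : dMt
| dMeet : dMt -> dMt -> dMt
| dJoin : dMt -> dMt -> dMt
| dNeg  : dMt -> dMt.

Fixpoint dM_vars_in (I : fset) (t : dMt) : bool :=
  match t with
  | dVar i => fmem I i
  | dZero | dOne => true
  | dMeet a b | dJoin a b => dM_vars_in I a && dM_vars_in I b
  | dNeg a => dM_vars_in I a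
  end.

Inductive dMeq : dMt -> dMt -> Prop :=
| dMeq_refl a : dMeq a a
| dMeq_sym a b : dMeq a b -> dMeq b a
| dMeq_trans a b c : dMeq a b -> dMeq b c -> dMeq a c
| dMeq_meet a a' b b' : dMeq a a' -> dMeq b b' -> dMeq (dMeet a b) (dMeet a' b')
| dMeq_join a a' b b' : dMeq a a' -> dMeq b b' -> dMeq (dJoin a b) (dJoin a' b')
| dMeq_neg a a' : dMeq a a' -> dMeq (dNeg a) (dNeg a')
| dMeq_meetA a b c : dMeq (dMeet a (dMeet b c)) (dMeet (dMeet a b) c)
| dMeq_joinA a b c : dMeq (dJoin a (dJoin b c)) (dJoin (dJoin a b) c)
| dMeq_meetC a b : dMeq (dMeet a b) (dMeet b a)
| dMeq_joinC a b : dMeq (dJoin a b) (dJoin b a)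
| dMeq_meetJ a b : dMeq (dMeet a (dJoin a b)) a
| dMeq_joinM a b : dMeq (dJoin a (dMeet a b)) a
| dMeq_meetDl a b c : dMeq (dMeet a (dJoin b c)) (dJoin (dMeet a b) (dMeet a c))
| dMeq_meet1 a : dMeq (dMeet a dOne) a
| dMeq_join0 a : dMeq (dJoin a dZero) a
| dMeq_negK a : dMeq (dNeg (dNeg a)) a
| dMeq_negM a b : dMeq (dNeg (dMeet a b)) (dJoin (dNeg a) (dNeg b)).

Fixpoint evalU (rho : nat -> unitI) (t : dMt) : unitI :=
  match t with
  | dVar i => rho i
  | dZero => u0
  | dOne => u1
  | dMeet a b => umin (evalU rho a) (evalU rho b)
  | dJoin a b => umax (evalU rho a) (evalU rho b)
  | dNeg a => uneg (evalU rho a)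
  end.

Record hom (I J : fset) := Hom {
  hom_fun :> name_in J -> dMt;
  hom_vars : forall j, dM_vars_in I (hom_fun j)
}.

Definition strict (I J : fset) (f : hom I J) : Prop :=
  forall j : name_in J, ~ dMeq (f j) dZero /\ ~ dMeq (f j) dOne.

Definition cube (I : fset) := name_in I -> unitI.

(* extension of u : [0,1]^I to an assignment of all names (only the values on
   I matter for terms with variables in I) *)
Definition ext (I : fset) (u : cube I) : nat -> unitI :=
  fun i => match @insub nat (fmem I) _ i with Some k => u k | None => u0 end.

Definition hom_map (I J : fset) (f : hom I J) (u : cube I) : cube J :=
  fun j => evalU (ext u) (f j).

Definition hom_x (I J : fset) (f : hom I J) (p : cube I * unitI) : cube J * unitI :=
  (hom_map f p.1, p.2).

Lemma face_proof (I : fset) (i : nat) (b : bool) (j : name_in I) :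
  dM_vars_in (fremove I i)
    (if sval j == i then (if b then dOne else dZero) else dVar (sval j)).
Proof.
case: j => j hj /=; case: eqP => [_|ne]; first by case: b.
move: hj; rewrite /= /fmem /fremove /= mem_filter => ->; rewrite andbT; exact/eqP.
Qed.

Definition face (I : fset) (i : nat) (b : bool) : hom (fremove I i) I :=
  @Hom (fremove I i) I
    (fun j => if sval j == i then (if b then dOne else dZero) else dVar (sval j))
    (face_proof i b).

Definition boundary (I : fset) (u : cube I) : Prop :=
  exists k : name_in I, sval (u k) = 0%R \/ sval (u k) = 1%R.

Inductive Ft : Type :=
| FEq0  : nat -> Ft
| FEq1  : nat -> Ft
| FBot  : Ft
| FTop  : Ft
| FMeet : Ft -> Ft -> Ft
| FJoin : Ft -> Ft -> Ft.

Fixpoint F_vars_in (I : fset) (t : Ft) : bool :=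
  match t with
  | FEq0 i | FEq1 i => fmem I i
  | FBot | FTop => true
  | FMeet a b | FJoin a b => F_vars_in I a && F_vars_in I b
  end.

Inductive Feq : Ft -> Ft -> Prop :=
| Feq_refl a : Feq a a
| Feq_sym a b : Feq a b -> Feq b a
| Feq_trans a b c : Feq a b -> Feq b c -> Feq a c
| Feq_meet a a' b b' : Feq a a' -> Feq b b' -> Feq (FMeet a b) (FMeet a' b')
| Feq_join a a' b b' : Feq a a' -> Feq b b' -> Feq (FJoin a b) (FJoin a' b')
| Feq_meetA a b c : Feq (FMeet a (FMeet b c)) (FMeet (FMeet a b) c)
| Feq_joinA a b c : Feq (FJoin a (FJoin b c)) (FJoin (FJoin a b) c)
| Feq_meetC a b : Feq (FMeet a b) (FMeet b a)
| Feq_joinC a b : Feq (FJoin a b) (FJoin b a)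
| Feq_meetJ a b : Feq (FMeet a (FJoin a b)) a
| Feq_joinM a b : Feq (FJoin a (FMeet a b)) a
| Feq_meetDl a b c : Feq (FMeet a (FJoin b c)) (FJoin (FMeet a b) (FMeet a c))
| Feq_meet1 a : Feq (FMeet a FTop) a
| Feq_join0 a : Feq (FJoin a FBot) a
| Feq_01 i : Feq (FMeet (FEq0 i) (FEq1 i)) FBot.

(* r |-> (r = 1), the lattice map dM -> F with i |-> (i=1), 1-i |-> (i=0),
   0 |-> 0_F, 1 |-> 1_F; computed on terms by pushing negations to the
   generators.  toF true r = (r = 1), toF false r = (1 - r = 1). *)
Fixpoint toF (pos : bool) (t : dMt) : Ft :=
  match t with
  | dVar i => if pos then FEq1 i else FEq0 i
  | dZero => if pos then FBot else FTop
  | dOne => if pos then FTop else FBot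
  | dMeet a b => if pos then FMeet (toF pos a) (toF pos b)
                 else FJoin (toF pos a) (toF pos b)
  | dJoin a b => if pos then FJoin (toF pos a) (toF pos b)
                 else FMeet (toF pos a) (toF pos b)
  | dNeg a => toF (~~ pos) a
  end.

Fixpoint Fsubst (I J : fset) (f : hom I J) (psi : Ft) : Ft :=
  match psi with
  | FEq1 j => match @insub nat (fmem J) _ j with
              | Some k => toF true (f k) | None => FBot end
  | FEq0 j => match @insub nat (fmem J) _ j with
              | Some k => toF false (f k) | None => FBot end
  | FBot => FBot
  | FTop => FTop
  | FMeet a b => FMeet (Fsubst f a) (Fsubst f b)
  | FJoin a b => FJoin (Fsubst f a) (Fsubst f b)
  end.

(* Main.v *)
Require Import Defs.
From mathcomp Require Import all_boot.
From Stdlib Require Import Reals.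
From Stdlib Require Import ProofIrrelevance Classical FunctionalExtensionality Lra.
From mathcomp Require Import zify.

Inductive K3 := K0 | KU | K1.
Definition kmin a b := match a, b with
  | K0, _ => K0 | _, K0 => K0 | K1, x => x | x, K1 => x | KU, KU => KU end.
Definition kmax a b := match a, b with
  | K1, _ => K1 | _, K1 => K1 | K0, x => x | x, K0 => x | KU, KU => KU end.
Definition kneg a := match a with K0 => K1 | K1 => K0 | KU => KU end.
Definition isK1 k := if k is K1 then true else false.
Definition isK0 k := if k is K0 then true else false.
Fixpoint kval (t : dMt) : K3 := match t with
  | dVar _ => KU | dZero => K0 | dOne => K1
  | dMeet a b => kmin (kval a) (kval b)
  | dJoin a b => kmax (kval a) (kval b)
  | dNeg a => kneg (kval a) end.

Lemma kval_sound a b : dMeq a b -> kval a = kval b.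
Proof.
induction 1; simpl; try congruence;
by repeat match goal with |- context [kval ?x] => case: (kval x) end.
Qed.

Fixpoint eval0 (t : Ft) : bool := match t with
  | FEq0 _ | FEq1 _ | FBot => false | FTop => true
  | FMeet a b => eval0 a && eval0 b
  | FJoin a b => eval0 a || eval0 b end.

Lemma eval0_sound a b : Feq a b -> eval0 a = eval0 b.
Proof.
induction 1; simpl; try congruence;
by repeat match goal with |- context [eval0 ?x] => case: (eval0 x) end.
Qed.

Lemma Feq_meetT a : Feq (FMeet FTop a) a.
Proof. apply: Feq_trans (Feq_meetC _ _) (Feq_meet1 _). Qed.
Lemma Feq_joinB a : Feq (FJoin FBot a) a.
Proof. apply: Feq_trans (Feq_joinC _ _) (Feq_join0 _). Qed.
Lemma Feq_joinT a : Feq (FJoin FTop a) FTop.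
Proof.
apply: Feq_trans (Feq_joinM FTop a).
apply: Feq_join; [exact: Feq_refl | exact: Feq_sym (Feq_meetT a)].
Qed.
Lemma Feq_meetB a : Feq (FMeet FBot a) FBot.
Proof.
apply: Feq_trans (Feq_meetJ FBot a).
apply: Feq_meet; [exact: Feq_refl | exact: Feq_sym (Feq_joinB a)].
Qed.
Lemma Feq_joinT' a : Feq (FJoin a FTop) FTop.
Proof. exact: Feq_trans (Feq_joinC _ _) (Feq_joinT a). Qed.
Lemma Feq_meetB' a : Feq (FMeet a FBot) FBot.
Proof. exact: Feq_trans (Feq_meetC _ _) (Feq_meetB a). Qed.

Lemma eval0_complete a : eval0 a -> Feq a FTop.
Proof.
elim: a => //=.
- move=> _; exact: Feq_refl.
- move=> a IHa b IHb /andP [ha hb].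
  apply: Feq_trans (Feq_meet (IHa ha) (IHb hb)) (Feq_meet1 _).
- move=> a IHa b IHb /orP [ha|hb].
  + apply: Feq_trans (Feq_join (IHa ha) (Feq_refl b)) (Feq_joinT _).
  + apply: Feq_trans (Feq_join (Feq_refl a) (IHb hb)) (Feq_joinT' _).
Qed.

Lemma eval0_toF t :
  eval0 (toF true t) = isK1 (kval t) /\ eval0 (toF false t) = isK0 (kval t).
Proof.
elim: t => //=.
- move=> a [-> ->] b [-> ->].
  by case: (kval a); case: (kval b).
- move=> a [-> ->] b [-> ->].
  by case: (kval a); case: (kval b).
- by move=> a [-> ->]; case: (kval a).
Qed.

Lemma toF_const t :
  (kval t = K1 -> Feq (toF true t) FTop /\ Feq (toF false t) FBot) /\
  (kval t = K0 -> Feq (toF true t) FBot /\ Feq (toF false t) FTop).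
Proof.
elim: t => /=.
- by [].
- by split=> // _; split; apply: Feq_refl.
- by split=> // _; split; apply: Feq_refl.
- move=> a [Ha1 Ha0] b [Hb1 Hb0]; split.
  + case Ea: (kval a); case Eb: (kval b) => //= _.
    case: (Ha1 Ea) => A1 A2; case: (Hb1 Eb) => B1 B2; split.
    * exact: Feq_trans (Feq_meet A1 B1) (Feq_meet1 _).
    * exact: Feq_trans (Feq_join A2 B2) (Feq_join0 _).
  + case Ea: (kval a); case Eb: (kval b) => //= _;
    first [ case: (Ha0 Ea) => A1 A2; split;
            [exact: Feq_trans (Feq_meet A1 (Feq_refl _)) (Feq_meetB _)
            |exact: Feq_trans (Feq_join A2 (Feq_refl _)) (Feq_joinT _)]
          | case: (Hb0 Eb) => B1 B2; split;
            [exact: Feq_trans (Feq_meet (Feq_refl _) B1) (Feq_meetB' _)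
            |exact: Feq_trans (Feq_join (Feq_refl _) B2) (Feq_joinT' _)]].
- move=> a [Ha1 Ha0] b [Hb1 Hb0]; split.
  + case Ea: (kval a); case Eb: (kval b) => //= _;
    first [ case: (Ha1 Ea) => A1 A2; split;
            [exact: Feq_trans (Feq_join A1 (Feq_refl _)) (Feq_joinT _)
            |exact: Feq_trans (Feq_meet A2 (Feq_refl _)) (Feq_meetB _)]
          | case: (Hb1 Eb) => B1 B2; split;
            [exact: Feq_trans (Feq_join (Feq_refl _) B1) (Feq_joinT' _)
            |exact: Feq_trans (Feq_meet (Feq_refl _) B2) (Feq_meetB' _)]].
  + case Ea: (kval a); case Eb: (kval b) => //= _.
    case: (Ha0 Ea) => A1 A2; case: (Hb0 Eb) => B1 B2; split.
    * exact: Feq_trans (Feq_join A1 B1) (Feq_join0 _).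
    * exact: Feq_trans (Feq_meet A2 B2) (Feq_meet1 _).
- move=> a [Ha1 Ha0]; split.
  + case Ea: (kval a) => //= _; case: (Ha0 Ea) => A1 A2; by split.
  + case Ea: (kval a) => //= _; case: (Ha1 Ea) => A1 A2; by split.
Qed.
Set Implicit Arguments.
Unset Strict Implicit.
Lemma insub_in (I : fset) n (H : fmem I n) :
  @insub nat (fmem I) (name_in I) n = Some (exist _ n H).
Proof. exact: (insubT (fmem I) H). Qed.
Lemma insub_out (I : fset) n (H : ~ fmem I n) :
  @insub nat (fmem I) (name_in I) n = None.
Proof. apply: insubN; exact/negP. Qed.

Lemma ext_val (I : fset) (u : cube I) n (H : fmem I n) : ext u n = u (exist _ n H).
Proof. by rewrite /ext insub_in. Qed.
Lemma ext_sval (I : fset) (u : cube I) (k : name_in I) : ext u (sval k) = u k.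
Proof. case: k => n H; exact: ext_val. Qed.

Lemma ueq (x y : unitI) : sval x = sval y -> x = y.
Proof. case: x => x hx; case: y => y hy /= E; subst y; by rewrite (proof_irrelevance _ hx hy). Qed.

Lemma eval_const rho t :
  (kval t = K1 -> evalU rho t = u1) /\ (kval t = K0 -> evalU rho t = u0).
Proof.
elim: t => //=.
- move=> a [Ha1 Ha0] b [Hb1 Hb0]; split.
  + case Ea: (kval a); case Eb: (kval b) => //= _.
    rewrite (Ha1 Ea) (Hb1 Eb); apply: ueq => /=; apply: Rmin_left; lra.
  + case Ea: (kval a); case Eb: (kval b) => //= _;
    first [ rewrite (Ha0 Ea); apply: ueq => /=; apply: Rmin_left;
            by case: (evalU rho b) => ? /= []
          | rewrite (Hb0 Eb); apply: ueq => /=; apply: Rmin_right;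
            by case: (evalU rho a) => ? /= [] ].
- move=> a [Ha1 Ha0] b [Hb1 Hb0]; split.
  + case Ea: (kval a); case Eb: (kval b) => //= _;
    first [ rewrite (Ha1 Ea); apply: ueq => /=; apply: Rmax_left;
            by case: (evalU rho b) => ? /= []
          | rewrite (Hb1 Eb); apply: ueq => /=; apply: Rmax_right;
            by case: (evalU rho a) => ? /= [] ].
  + case Ea: (kval a); case Eb: (kval b) => //= _.
    rewrite (Ha0 Ea) (Hb0 Eb); apply: ueq => /=; apply: Rmax_left; lra.
- move=> a [Ha1 Ha0]; split.
  + case Ea: (kval a) => //= _; rewrite (Ha0 Ea); apply: ueq => /=; lra.
  + case Ea: (kval a) => //= _; rewrite (Ha1 Ea); apply: ueq => /=; lra.
Qed.

Lemma evalU_ext (I : fset) rho rho' t : dM_vars_in I t ->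
  (forall n, fmem I n -> rho n = rho' n) -> evalU rho t = evalU rho' t.
Proof.
move=> Ht E; elim: t Ht => //=.
- by move=> a IHa b IHb /andP [ha hb]; rewrite IHa // IHb.
- by move=> a IHa b IHb /andP [ha hb]; rewrite IHa // IHb.
- by move=> a IHa ha; rewrite IHa.
Qed.

Fixpoint subst (s : nat -> dMt) (t : dMt) : dMt := match t with
  | dVar n => s n | dZero => dZero | dOne => dOne
  | dMeet a b => dMeet (subst s a) (subst s b)
  | dJoin a b => dJoin (subst s a) (subst s b)
  | dNeg a => dNeg (subst s a) end.

Lemma evalU_subst rho s t : evalU rho (subst s t) = evalU (fun n => evalU rho (s n)) t.
Proof. by elim: t => //= [a -> b ->|a -> b ->|a ->]. Qed.

Definition hsub (K I : fset) (h : hom K I) (n : nat) : dMt :=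
  match @insub nat (fmem I) (name_in I) n with Some k => h k | None => dZero end.

Lemma subst_vars (K I : fset) (h : hom K I) t : dM_vars_in I t ->
  dM_vars_in K (subst (hsub h) t).
Proof.
elim: t => //=.
- by move=> n Hn; rewrite /hsub insub_in; apply: hom_vars.
- by move=> a IHa b IHb /andP [ha hb]; rewrite IHa // IHb.
- by move=> a IHa b IHb /andP [ha hb]; rewrite IHa // IHb.
Qed.

Definition hcomp (K I J : fset) (f : hom I J) (h : hom K I) : hom K J :=
  @Hom K J (fun j => subst (hsub h) (f j)) (fun j => subst_vars h (hom_vars f j)).

Lemma homx_comp (K I J : fset) (f : hom I J) (h : hom K I) p :
  hom_x f (hom_x h p) = hom_x (hcomp f h) p.
Proof.
rewrite /hom_x /=; congr pair; apply: functional_extensionality => j.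
rewrite /hom_map /= evalU_subst; apply: (evalU_ext (hom_vars f j)) => n Hn.
by rewrite /hsub insub_in ext_val.
Qed.

Lemma toF_vars (I : fset) pos t : dM_vars_in I t -> F_vars_in I (toF pos t).
Proof.
elim: t pos => /=.
- by move=> n [].
- by case.
- by case.
- by move=> a IHa b IHb [] /andP [ha hb] /=; rewrite IHa // IHb.
- by move=> a IHa b IHb [] /andP [ha hb] /=; rewrite IHa // IHb.
- by move=> a IHa pos ha; apply: IHa.
Qed.

Lemma Fsubst_vars (I J : fset) (f : hom I J) psi : F_vars_in I (Fsubst f psi).
Proof.
elim: psi => //=.
- by move=> n; case: insub => // k; apply/toF_vars/hom_vars.
- by move=> n; case: insub => // k; apply/toF_vars/hom_vars.
- by move=> a -> b ->.
- by move=> a -> b ->.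
Qed.

Lemma Fsubst_toF (K I : fset) (h : hom K I) pos t : dM_vars_in I t ->
  Fsubst h (toF pos t) = toF pos (subst (hsub h) t).
Proof.
elim: t pos => /=.
- by move=> n [] Hn /=; rewrite /hsub insub_in.
- by case.
- by case.
- by move=> a IHa b IHb [] /andP [ha hb] /=; rewrite IHa // IHb.
- by move=> a IHa b IHb [] /andP [ha hb] /=; rewrite IHa // IHb.
- by move=> a IHa pos ha; apply: IHa.
Qed.

Lemma Fsubst_comp (K I J : fset) (f : hom I J) (h : hom K I) psi :
  Fsubst h (Fsubst f psi) = Fsubst (hcomp f h) psi.
Proof.
elim: psi => //=.
- by move=> n; case: insub => // k; rewrite Fsubst_toF //; apply: hom_vars.
- by move=> n; case: insub => // k; rewrite Fsubst_toF //; apply: hom_vars.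
- by move=> a -> b ->.
- by move=> a -> b ->.
Qed.

Lemma eval0_Fsubst (I J : fset) (f : hom I J) psi :
  (forall k, kval (f k) = KU) -> F_vars_in J psi -> eval0 (Fsubst f psi) = eval0 psi.
Proof.
move=> Hs; elim: psi => //=.
- by move=> n Hn; rewrite insub_in; case: (eval0_toF (f (exist _ n Hn))) => _ ->; rewrite Hs.
- by move=> n Hn; rewrite insub_in; case: (eval0_toF (f (exist _ n Hn))) => -> _; rewrite Hs.
- by move=> a IHa b IHb /andP [ha hb]; rewrite IHa // IHb.
- by move=> a IHa b IHb /andP [ha hb]; rewrite IHa // IHb.
Qed.

Lemma fremove_mem (I : fset) i n : fmem (fremove I i) n = (n != i) && fmem I n.
Proof. by rewrite /fmem /= mem_filter. Qed.

Lemma widen_proof (I : fset) i (k : name_in (fremove I i)) : fmem I (sval k).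
Proof. by case: k => n /=; rewrite fremove_mem => /andP []. Qed.
Definition widen (I : fset) i (k : name_in (fremove I i)) : name_in I :=
  exist _ (sval k) (widen_proof k).

Lemma fremove_size (I : fset) i : fmem I i -> size (sval (fremove I i)) < size (sval I).
Proof.
rewrite /fmem /=; case: I => s _ /=; rewrite size_filter.
elim: s => //= x s IH; rewrite inE => /orP [/eqP ->|H].
  by rewrite eqxx /= add0n ltnS count_size.
by have := IH H; case: (_ != _) => /=; lia.
Qed.

Definition restr (I J : fset) (f : hom I J) j : hom I (fremove J j) :=
  @Hom I (fremove J j) (fun k => f (widen k)) (fun k => hom_vars f (widen k)).

Lemma homx_face_restr (I J : fset) (f : hom I J) (jj : name_in J) (b : bool) p :
  kval (f jj) = (if b then K1 else K0) ->
  hom_x f p = hom_x (face J (sval jj) b) (hom_x (restr f (sval jj)) p).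
Proof.
move=> Hk; rewrite /hom_x /=; congr pair; apply: functional_extensionality => j.
rewrite /hom_map /=; case: eqP => [E|NE].
- have -> : j = jj by apply: val_inj.
  case: b Hk => Hk /=.
  + by case: (eval_const (ext p.1) (f jj)) => ->.
  + by case: (eval_const (ext p.1) (f jj)) => _ ->.
- have Hm : fmem (fremove J (sval jj)) (sval j).
    by rewrite fremove_mem (svalP j) andbT; apply/eqP.
  rewrite /= (ext_val _ Hm) /=; congr evalU; congr (hom_fun f); exact: val_inj.
Qed.

Lemma Fsubst_face_restr (I J : fset) (f : hom I J) (jj : name_in J) (b : bool) psi :
  kval (f jj) = (if b then K1 else K0) ->
  Feq (Fsubst (restr f (sval jj)) (Fsubst (face J (sval jj) b) psi)) (Fsubst f psi).
Proof.
move=> Hk; case: (toF_const (f jj)) => T1 T0.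
elim: psi => /=.
- move=> n; case: (@idP (fmem J n)) => Hn; last first.
    by rewrite insub_out //; apply: Feq_refl.
  rewrite insub_in /=; case: eqP => [E|NE].
  + have Ej : exist (fmem J) n Hn = jj by apply: val_inj.
    rewrite Ej; case: b Hk => Hk /=.
    * by case: (T1 Hk) => _ H; apply: Feq_sym.
    * by case: (T0 Hk) => _ H; apply: Feq_sym.
  + have Hm : fmem (fremove J (sval jj)) n by rewrite fremove_mem Hn andbT; apply/eqP.
    cbn [toF Fsubst]; rewrite insub_in /=; have -> : widen (exist _ n Hm) = exist _ n Hn by apply: val_inj.
    exact: Feq_refl.
- move=> n; case: (@idP (fmem J n)) => Hn; last first.
    by rewrite insub_out //; apply: Feq_refl.
  rewrite insub_in /=; case: eqP => [E|NE].
  + have Ej : exist (fmem J) n Hn = jj by apply: val_inj.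
    rewrite Ej; case: b Hk => Hk /=.
    * by case: (T1 Hk) => H _; apply: Feq_sym.
    * by case: (T0 Hk) => H _; apply: Feq_sym.
  + have Hm : fmem (fremove J (sval jj)) n by rewrite fremove_mem Hn andbT; apply/eqP.
    cbn [toF Fsubst]; rewrite insub_in /=; have -> : widen (exist _ n Hm) = exist _ n Hn by apply: val_inj.
    exact: Feq_refl.
- exact: Feq_refl.
- exact: Feq_refl.
- by move=> a Ha b' Hb; apply: Feq_meet.
- by move=> a Ha b' Hb; apply: Feq_join.
Qed.

Lemma boundary_face (I : fset) (u : cube I) (z : unitI) : boundary u ->
  exists i b (u' : cube (fremove I i)), fmem I i /\ (u, z) = hom_x (face I i b) (u', z).
Proof.
case=> k Hk; exists (sval k).
have Hb : exists b : bool, u k = if b then u1 else u0.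
  by case: Hk => H; [exists false | exists true]; apply: ueq.
case: Hb => b Hb; exists b; exists (fun k' : name_in (fremove I (sval k)) => u (widen k')); split; first exact: (svalP k).
rewrite /hom_x /=; congr pair; apply: functional_extensionality => j.
rewrite /hom_map /=; case: eqP => [E|NE].
- have -> : j = k by apply: val_inj.
  by rewrite Hb; case: b {Hb}.
- have Hm : fmem (fremove I (sval k)) (sval j).
    by rewrite fremove_mem (svalP j) andbT; apply/eqP.
  rewrite /= (ext_val _ Hm) /=; congr u; exact: val_inj.
Qed.
Unset Implicit Arguments.
Set Strict Implicit.

Theorem theoremC1
  (r : forall I : fset, cube I * unitI -> cube I * unitI)
  (rpsi : forall I : fset, Ft -> cube I * unitI -> cube I * unitI)
  (r_idem : forall I p, r I (r I p) = r I p)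
  (r_fix : forall I (u : cube I) (z : unitI),
     r I (u, z) = (u, z) <-> (boundary u \/ sval z = 0%R))
  (r_strict : forall I J (f : hom I J), strict f ->
     forall p, r J (hom_x f (r I p)) = r J (hom_x f p))
  (rpsi_wd : forall I psi psi', F_vars_in I psi -> F_vars_in I psi' ->
     Feq psi psi' -> rpsi I psi = rpsi I psi')
  (rpsi_a : forall I psi, F_vars_in I psi -> Feq psi FTop ->
     forall p, rpsi I psi p = p)
  (rpsi_b : forall I psi, F_vars_in I psi -> ~ Feq psi FTop ->
     forall p, rpsi I psi p = rpsi I psi (r I p))
  (rpsi_c : forall I psi, F_vars_in I psi ->
     forall p : cube I * unitI, sval p.2 = 0%R -> rpsi I psi p = p)
  (rpsi_d : forall I (i : nat) (b : bool), fmem I i ->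
     forall psi, F_vars_in I psi ->
     forall p, rpsi I psi (hom_x (face I i b) p)
               = hom_x (face I i b) (rpsi (fremove I i) (Fsubst (face I i b) psi) p)) :
  forall I J (f : hom I J) (psi : Ft), F_vars_in J psi ->
    forall p, rpsi J psi (hom_x f p) = hom_x f (rpsi I (Fsubst f psi) p).
Proof.
have main : forall n I J, size (sval I) + size (sval J) < n ->
  forall (f : hom I J) (psi : Ft), F_vars_in J psi ->
    forall p, rpsi J psi (hom_x f p) = hom_x f (rpsi I (Fsubst f psi) p).
  elim=> [//|n IH] I J Hn f psi Hpsi p.
  case: (classic (exists jj : name_in J, kval (f jj) <> KU)) => [[jj Hjj]|Hall].
  - (* a constant coordinate: factor through a face *)
    pose b := if kval (f jj) is K1 then true else false.
    have Hkb : kval (f jj) = if b then K1 else K0.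
      by rewrite /b; move: Hjj; case: (kval _).
    have Hj : fmem J (sval jj) := svalP jj.
    have Hsz : size (sval I) + size (sval (fremove J (sval jj))) < n.
      have := fremove_size Hj; lia.
    rewrite (homx_face_restr p Hkb) (rpsi_d J (sval jj) b Hj psi Hpsi).
    rewrite (IH I _ Hsz (restr f (sval jj)) _ (Fsubst_vars _ _)).
    rewrite (rpsi_wd I _ _ (Fsubst_vars _ _) (Fsubst_vars _ _) (Fsubst_face_restr psi Hkb)).
    by rewrite -(homx_face_restr _ Hkb).
  - have Hs : forall jj, kval (f jj) = KU.
      by move=> jj; apply: NNPP => H; apply: Hall; exists jj.
    have Hstrict : strict f.
      move=> jj; split=> /kval_sound; by rewrite Hs.
    have Heval := eval0_Fsubst Hs Hpsi.
    case: (classic (Feq psi FTop)) => Htop.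
    + rewrite (rpsi_a J psi Hpsi Htop) (rpsi_a I _ (Fsubst_vars f psi)) //.
      by apply: eval0_complete; rewrite Heval (eval0_sound _ _ Htop).
    + have Htop' : ~ Feq (Fsubst f psi) FTop.
        by move/eval0_sound; rewrite Heval /= => /eval0_complete.
      rewrite (rpsi_b J psi Hpsi Htop) -(r_strict _ _ _ Hstrict) -(rpsi_b J psi Hpsi Htop).
      rewrite (rpsi_b I _ (Fsubst_vars f psi) Htop' p).
      move: (r_idem I p); case: (r I p) => u z /r_fix [Hb|Hz].
      * case: (boundary_face z Hb) => i [b [u' [Hi ->]]].
        have Hsz : size (sval (fremove I i)) + size (sval J) < n.
          have := fremove_size Hi; lia.
        rewrite homx_comp (IH _ J Hsz (hcomp f (face I i b)) psi Hpsi).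
        rewrite (rpsi_d I i b Hi _ (Fsubst_vars f psi)) Fsubst_comp.
        by rewrite homx_comp.
      * by rewrite (rpsi_c J psi Hpsi) // (rpsi_c I _ (Fsubst_vars f psi)).
move=> I J f psi Hpsi p; exact: (main (size (sval I) + size (sval J)).+1).
Qed.
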